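(* Suppose $k\ge2$ and $n\ge k+2$. Then for every $1\le\ell\le k+1$, $$\mathrm{Ker}(\Theta_1)\subset\mathrm{Ker}(\Theta_\ell)$$ as subgroups of $H^*\otimes_\mathbb{Z}\mathcal{L}_n(k+1)$ (with $\Theta_\ell$ restricted to $H^*\otimes_\mathbb{Z}\mathcal{L}_n(k+1)$).
   Context: $F_n$ is the free group of rank $n$, $H=F_n/[F_n,F_n]\cong\mathbb{Z}^n$, $H^*=\mathrm{Hom}(H,\mathbb{Z})$. $\mathcal{L}_n(m)\subset H^{\otimes m}$ is the degree-$m$ part of the free Lie algebra on $H$, i.e. the $\mathbb{Z}$-span of left-normed brackets $[a_1,\dots,a_m]$ computed with $[x,y]=x\otimes y-y\otimes x$ (equivalently the $m$th graded quotient of the lower central series of $F_n$). For $m\ge0$, $\mathcal{C}_n(m)$ is the quotient of $H^{\otimes m}$ by the subgroup generated by all $a_1\otimes a_2\otimes\cdots\otimes a_m-a_2\otimes\cdots\otimes a_m\otimes a_1$ ($\mathcal{C}_n(0)=\mathbb{Z}$), with projection $\pi_m$. For $1\le\ell\le k+1$: $\Phi_{1,\ell+1}:H^*\otimes H^{\otimes k+1}\to H^{\otimes k}$, $f\otimes a_1\otimes\cdots\otimes a_{k+1}\mapsto f(a_\ell)\,a_1\otimes\cdots\otimes\widehat{a_\ell}\otimes\cdots\otimes a_{k+1}$; $\varpi_\ell:H^{\otimes k}\to\mathcal{C}_n(\ell-1)\otimes\mathcal{C}_n(k-\ell+1)$, $a_1\otimes\cdots\otimes a_k\mapsto\pi_{\ell-1}(a_1\otimes\cdots\otimes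 a_{\ell-1})\otimes\pi_{k-\ell+1}(a_\ell\otimes\cdots\otimes a_k)$; and $\Theta_\ell=\varpi_\ell\circ\Phi_{1,\ell+1}$. (So $\Theta_1=\pi_k\circ\Phi_{1,2}$ up to the identification $\mathbb{Z}\otimes\mathcal{C}_n(k)=\mathcal{C}_n(k)$.) *)

(* Defs.v *)
From HB Require Import structures.
From mathcomp Require Import all_boot all_order all_algebra.
Set Implicit Arguments. Unset Strict Implicit. Unset Printing Implicit Defensive.
Import GRing.Theory.
Local Open Scope ring_scope.

(* H = Z^n with basis e_0..e_{n-1} (indexed by 'I_n); H^* has dual basis e_i^*.
   H^{(x)m} is the free Z-module on words of length m: coefficient functions
   m.-tuple 'I_n -> int.  H^* (x) H^{(x)m} is free on pairs (i, word). *)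
Definition tens (n m : nat) := {ffun m.-tuple 'I_n -> int}.
Definition dtens (n m : nat) := {ffun 'I_n * m.-tuple 'I_n -> int}.

Definition in_span (I : finType) (V : zmodType) (g : I -> V) (x : V) : Prop :=
  exists c : I -> int, x = \sum_(i : I) g i *~ c i.

(* Expansion of the left-normed bracket [a1,...,am] (with [x,y] = x(x)y - y(x)x)
   as a list of signed words (coefficient, word). *)
Definition brk_step (n : nat) (acc : seq (int * seq 'I_n)) (b : 'I_n) :=
  [seq (p.1, rcons p.2 b) | p <- acc] ++ [seq (- p.1, b :: p.2) | p <- acc].

Definition brk (n : nat) (s : seq 'I_n) : seq (int * seq 'I_n) :=
  if s is a :: s' then foldl (@brk_step n) [:: (1, [:: a])] s' else [::].

Definition lie_bracket (n m : nat) (w : m.-tuple 'I_n) : tens n m :=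
  [ffun v : m.-tuple 'I_n =>
     \sum_(p <- brk (tval w)) (if p.2 == tval v then p.1 else 0)].

(* Generators e_i^* (x) [e_{w1},...,e_{w(k+1)}] of H^* (x) L_n(k+1). *)
Definition lie_gen (n k : nat) (iw : 'I_n * (k.+1).-tuple 'I_n) : dtens n k.+1 :=
  [ffun jv : 'I_n * (k.+1).-tuple 'I_n =>
     if jv.1 == iw.1 then lie_bracket iw.2 jv.2 else 0].

(* Phi_{1,l+1} : H^* (x) H^{(x)(k+1)} -> H^{(x)k}, extended Z-linearly from
   e_i^* (x) e_{a1} (x) ... (x) e_{a(k+1)} |-> e_i^*(e_{al}) e_{a1}..^e_{al}^..e_{a(k+1)}. *)
Definition Phi (n k l : nat) (x : dtens n k.+1) : tens n k :=
  [ffun v : k.-tuple 'I_n =>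
     \sum_(iw : 'I_n * (k.+1).-tuple 'I_n)
        (if (nth iw.1 (tval iw.2) l.-1 == iw.1) &&
            (take l.-1 (tval iw.2) ++ drop l (tval iw.2) == tval v)
         then x iw else 0)].

(* Generators of the kernel of
     varpi_l : H^{(x)k} = H^{(x)p} (x) H^{(x)(k-p)} -> C_n(p) (x) C_n(k-p),  p = l-1,
   namely (a1..ap - a2..ap a1) (x) b  and  a (x) (b1..bq - b2..bq b1),
   on basis words u (first component) with the boolean choosing prefix/suffix. *)
Definition rot_part (n p : nat) (pre : bool) (u : seq 'I_n) : seq 'I_n :=
  if pre then rot 1 (take p u) ++ drop p u else take p u ++ rot 1 (drop p u).

Definition cyc_rel (n k p : nat) (ub : k.-tuple 'I_n * bool) : tens n k :=
  [ffun v : k.-tuple 'I_n =>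
     (if tval v == tval ub.1 then 1 else 0) -
     (if tval v == rot_part p ub.2 (tval ub.1) then 1 else 0)].

(* x in Ker(Theta_l) = Ker(varpi_l o Phi_{1,l+1}). *)
Definition in_ker_Theta (n k l : nat) (x : dtens n k.+1) : Prop :=
  in_span (@cyc_rel n k l.-1) (Phi l x).

(* Main.v *)
Require Import Defs.
From HB Require Import structures.
From mathcomp Require Import all_boot all_order all_algebra.
From mathcomp Require Import ring.
Set Implicit Arguments. Unset Strict Implicit. Unset Printing Implicit Defensive.
Import GRing.Theory.
Local Open Scope ring_scope.

Fixpoint W (T : finType) (N : nat) : seq (seq T) :=
  if N is N'.+1 then [seq c :: s | c <- index_enum T, s <- W T N'] else [:: [::]].

Lemma mem_W (T : finType) N (s : seq T) : (s \in W T N) = (size s == N).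
Proof.
elim: N s => [|N IH] [|c s] //=.
- apply/allpairsP => -[[c' s'] [_ _]] //.
- apply/allpairsP/idP => [[[c' s'] [_ Hs /= [_ ->]]]|Hs].
    by move: Hs; rewrite IH.
  by exists (c, s); split => //; rewrite /= IH.
Qed.

Lemma uniq_W (T : finType) N : uniq (W T N).
Proof.
elim: N => [|N IH] //=.
apply: allpairs_uniq => //; first exact: index_enum_uniq.
by move=> [c s] [c' s'] _ _ /= [-> ->].
Qed.

Lemma perm_W (T : finType) N (f g : seq T -> seq T) :
  cancel g f -> injective f -> (forall s, size (g s) = size s) ->
  (forall s, size (f s) = size s) ->
  perm_eq (W T N) (map f (W T N)).
Proof.
move=> gK fI sg sf; apply: uniq_perm; first exact: uniq_W.
  by rewrite map_inj_uniq // uniq_W.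
move=> s; rewrite mem_W; apply/idP/idP => [Hs|/mapP [t Ht ->]].
  by rewrite -(gK s) map_f // mem_W sg.
by rewrite sf -mem_W.
Qed.

Section SHsec.
Variable T : finType.
Implicit Types (G F : seq T -> int) (a b z : seq T).

Definition SH G a b : int :=
  \sum_(q <- W (bool * T)%type (size a + size b)%N)
    (if (mask (map fst q) (map snd q) == a) &&
        (mask (map negb (map fst q)) (map snd q) == b)
     then G (map snd q) else 0).

Lemma SH_eq G F a b : (forall z, size z = (size a + size b)%N -> G z = F z) ->
  SH G a b = SH F a b.
Proof.
move=> H; rewrite /SH; apply: eq_big_seq => q; rewrite mem_W => /eqP Hq.
by case: ifP => // _; rewrite H // size_map.
Qed.

Lemma SH_zero a b : SH (fun _ => 0) a b = 0.
Proof. by rewrite /SH big1 // => q _; case: ifP. Qed.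

Lemma SH_sub G F a b : SH (fun z => G z - F z) a b = SH G a b - SH F a b.
Proof.
rewrite /SH -sumrB; apply: eq_bigr => q _.
by case: ifP => _; rewrite ?subr0.
Qed.

Lemma SH_sumz (J : finType) (H : J -> seq T -> int) (c : J -> int) a b :
  SH (fun z => \sum_(j : J) H j z *~ c j) a b = \sum_(j : J) SH (H j) a b *~ c j.
Proof.
rewrite /SH; under [RHS]eq_bigr do rewrite mulrz_suml.
rewrite exchange_big /=; apply: eq_bigr => q _.
case: ifP => _ //; rewrite big1 // => j _; by rewrite mul0rz.
Qed.

Lemma SH_nil G : SH G [::] [::] = G [::].
Proof. by rewrite /SH /= big_seq1 /=. Qed.


Lemma sum_pair_bool (H : bool * T -> int) :
  \sum_(bc : bool * T) H bc = \sum_(c : T) H (true, c) + \sum_(c : T) H (false, c).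
Proof.
rewrite (eq_bigr (fun p => H (p.1, p.2))); last by case.
by rewrite -(pair_bigA _ (fun (b : bool) (c : T) => H (b, c))) big_bool.
Qed.

Lemma SH_cons G a b : a ++ b != [::] ->
  SH G a b = (if a is x :: a' then SH (fun z => G (x :: z)) a' b else 0) +
             (if b is y :: b' then SH (fun z => G (y :: z)) a b' else 0).
Proof.
move=> Hab; have [N HN] : exists N, (size a + size b = N.+1)%N.
  by exists (size a + size b).-1; rewrite prednK // lt0n -size_cat size_eq0.
rewrite /SH HN /= big_allpairs_dep sum_pair_bool /=.
congr (_ + _).
- case: a Hab HN => [|x a'] Hab HN /=.
    by rewrite big1 // => c _; rewrite big1 // => q _; rewrite andbF.
  move: HN; rewrite /= addSn => -[->].
  rewrite (bigD1 x) //= [X in _ + X]big1 ?addr0.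
    by apply: eq_bigr => q _; rewrite eqseq_cons eqxx.
  move=> c /negPf Hc; rewrite big1 // => q _.
  by rewrite eqseq_cons Hc.
- case: b Hab HN => [|y b'] Hab HN /=.
    by rewrite big1 // => c _; rewrite big1 // => q _; rewrite andbF.
  move: HN; rewrite /= addnS => -[->].
  rewrite (bigD1 y) //= [X in _ + X]big1 ?addr0.
    by apply: eq_bigr => q _; rewrite eqseq_cons eqxx.
  move=> c /negPf Hc; rewrite big1 // => q _.
  by rewrite eqseq_cons Hc andbF.
Qed.


Lemma SH_rev G a b : SH G a b = SH (fun z => G (rev z)) (rev a) (rev b).
Proof.
rewrite /SH !size_rev [RHS](perm_big _ (@perm_W _ _ rev rev revK (can_inj revK) (@size_rev _) (@size_rev _))).
rewrite big_map; apply: eq_bigr => q _.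
rewrite !map_rev -!rev_mask ?size_map // !(inj_eq (can_inj revK)) !revK //.
Qed.

Lemma SH_rcons G a b x y :
  SH G (rcons a x) (rcons b y) =
  SH (fun z => G (rcons z x)) a (rcons b y) + SH (fun z => G (rcons z y)) (rcons a x) b.
Proof.
rewrite SH_rev !rev_rcons SH_cons //= [SH (fun z => G (rcons z x)) _ _]SH_rev
   [SH (fun z => G (rcons z y)) _ _]SH_rev !rev_rcons.
by congr (_ + _); apply: SH_eq => z _; rewrite rev_cons.
Qed.

Lemma SH_nilL G b : SH G [::] b = G b.
Proof.
elim: b G => [|y b IH] G; first exact: SH_nil.
by rewrite SH_cons //= add0r IH.
Qed.

Lemma SH_nilR G a : SH G a [::] = G a.
Proof.
elim: a G => [|y a IH] G; first exact: SH_nil.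
by rewrite SH_cons //= addr0 IH.
Qed.

End SHsec.

Section Lie.
Variable T : finType.
Implicit Types (P Q : seq T -> int).

Lemma SH_if B (F : seq T -> int) a b :
  SH (fun z => if B then F z else 0) a b = if B then SH F a b else 0.
Proof. by case: B; [apply: SH_eq | exact: SH_zero]. Qed.

Definition Good P := forall u a w,
  P (u ++ a :: w) = (-1) ^+ size u * SH (fun z => P (a :: z)) (rev u) w.
Definition Shf P := forall a b, a != [::] -> b != [::] -> SH P a b = 0.

Definition Rm P (b : T) (y : seq T) : int :=
  if rev y is c :: r then (if c == b then P (rev r) else 0) else 0.
Definition Lm (b : T) P (y : seq T) : int :=
  if y is c :: r then (if c == b then P r else 0) else 0.

Lemma Rm_nil P b : Rm P b [::] = 0. Proof. by []. Qed.
Lemma Rm_rcons P b y c : Rm P b (rcons y c) = if c == b then P y else 0.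
Proof. by rewrite /Rm rev_rcons revK. Qed.

Lemma Good_ext P Q : (forall y, P y = Q y) -> Good P -> Good Q.
Proof.
move=> E GP u a w; rewrite -E GP; congr (_ * _); apply: SH_eq => z _; exact: E.
Qed.

Lemma Shf_ext P Q : (forall y, P y = Q y) -> Shf P -> Shf Q.
Proof.
move=> E SP a b Ha Hb; rewrite -(SP a b Ha Hb); apply: SH_eq => z _; by rewrite E.
Qed.

Lemma antipode P s : Good P -> s != [::] -> P s = - (-1) ^+ size s * P (rev s).
Proof.
move=> GP; case/lastP: s => [//|s d] _.
have := GP s d [::]; rewrite SH_nilR cats1 => ->.
by rewrite rev_rcons size_rcons exprS mulN1r opprK.
Qed.

Lemma Good_R P b : Good P -> Shf P -> Good (fun y => Rm P b y - Lm b P y).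
Proof.
move=> GP SP u a w.
rewrite SH_sub.
have -> : SH (fun z => Lm b P (a :: z)) (rev u) w = if a == b then SH P (rev u) w else 0.
  by rewrite -SH_if; apply: SH_eq.
case/lastP: w => [|w' d].
- rewrite !SH_nilR cats1 Rm_rcons.
  case: u => [|c u'].
    by rewrite /Rm /Lm /= expr0 mul1r; case: (a == b); rewrite ?subrr.
  rewrite rev_cons -rcons_cons Rm_rcons /= (antipode (s := c :: u')) //.
  rewrite -cats1 GP SH_nilR exprS rev_cons.
  case: (a == b); case: (c == b); rewrite /=; ring.
- case: u => [|c u'].
    by rewrite /= !SH_nilL expr0 mul1r.
  rewrite rev_cons SH_rcons (SP (rcons (rev u') c) (rcons w' d)); last 2 first.
  + by rewrite -size_eq0 size_rcons.
  + by rewrite -size_eq0 size_rcons.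
  rewrite (@SH_eq _ (fun z => Rm P b (a :: rcons z c)) (fun z => if c == b then P (a :: z) else 0)); last first.
    by move=> z _; rewrite -rcons_cons Rm_rcons.
  rewrite (@SH_eq _ (fun z => Rm P b (a :: rcons z d)) (fun z => if d == b then P (a :: z) else 0)); last first.
    by move=> z _; rewrite -rcons_cons Rm_rcons.
  have -> : Lm b P ((c :: u') ++ a :: rcons w' d) =
     if c == b then P (u' ++ a :: rcons w' d) else 0 by [].
  rewrite !SH_if -(rcons_cons a w' d) -rcons_cat Rm_rcons.
  rewrite (GP (c :: u') a w') (GP u' a (rcons w' d)) rev_cons exprS /=.
  case: (a == b); case: (c == b); case: (d == b); rewrite /=; ring.
Qed.

Lemma HS_match1 P b (x x' : T) a' a'' B : Shf P -> B != [::] ->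
  x :: a' = rcons a'' x' ->
  (if x == b then SH P a' B else 0) = (if x' == b then SH P a'' B else 0).
Proof.
move=> SP HB; case: a'' => [|x3 a3] /=; first by move=> [-> ->].
case: a' => [|x2 a2]; first by move/(congr1 size); rewrite /= size_rcons.
by move=> _; rewrite (SP (x2 :: a2) B) // (SP (x3 :: a3) B) //; case: (x == b); case: (x' == b).

Qed.

Lemma HS_match2 P b (x x' : T) a' a'' B : Shf P -> B != [::] ->
  x :: a' = rcons a'' x' ->
  (if x == b then SH P B a' else 0) = (if x' == b then SH P B a'' else 0).
Proof.
move=> SP HB; case: a'' => [|x3 a3] /=; first by move=> [-> ->].
case: a' => [|x2 a2]; first by move/(congr1 size); rewrite /= size_rcons.
by move=> _; rewrite (SP B (x2 :: a2)) // (SP B (x3 :: a3)) //; case: (x == b); case: (x' == b).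

Qed.

Lemma Shf_R P b : Shf P -> Shf (fun y => Rm P b y - Lm b P y).
Proof.
move=> SP a0 b0 Ha Hb; rewrite SH_sub.
have [x [a' Ea]] : exists x a', a0 = x :: a' by case: a0 Ha => // x a' _; exists x, a'.
have [y [b' Eb]] : exists y b', b0 = y :: b' by case: b0 Hb => // y b' _; exists y, b'.
have [a'' [x' Ea2]] : exists a'' x', a0 = rcons a'' x'
  by case/lastP: a0 Ha {Ea} => // a'' x' _; exists a'', x'.
have [b'' [y' Eb2]] : exists b'' y', b0 = rcons b'' y'
  by case/lastP: b0 Hb {Eb} => // b'' y' _; exists b'', y'.
have E1 : SH (fun z => Lm b P z) a0 b0 =
    (if x == b then SH P a' b0 else 0) + (if y == b then SH P a0 b' else 0).
  rewrite {1}Ea {1}Eb SH_cons ?Ea // -Ea -Eb.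
  by congr (_ + _); rewrite -SH_if; apply: SH_eq.
have E2 : SH (fun z => Rm P b z) a0 b0 =
    (if x' == b then SH P a'' b0 else 0) + (if y' == b then SH P a0 b'' else 0).
  rewrite {1}Ea2 {1}Eb2 SH_rcons -Ea2 -Eb2.
  by congr (_ + _); rewrite -SH_if; apply: SH_eq => z _; rewrite Rm_rcons.
rewrite E1 E2 (HS_match1 b SP Hb (etrans (esym Ea) Ea2)).
by rewrite (HS_match2 b SP Ha (etrans (esym Eb) Eb2)) subrr.
Qed.


Lemma Good_zero : Good (fun _ => 0).
Proof. by move=> u a w; rewrite SH_zero mulr0. Qed.

Lemma Shf_zero : Shf (fun _ => 0).
Proof. by move=> a b _ _; rewrite SH_zero. Qed.

Lemma Good_if B P : Good P -> Good (fun z => if B then P z else 0).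
Proof. by case: B => // _; exact: Good_zero. Qed.

Lemma Good_sumz (J : finType) (H : J -> seq T -> int) (c : J -> int) :
  (forall j, Good (H j)) -> Good (fun z => \sum_(j : J) H j z *~ c j).
Proof.
move=> G u a w; rewrite (SH_sumz (fun j z => H j (a :: z))) mulr_sumr.
by apply: eq_bigr => j _; rewrite G mulrzAr.
Qed.

Lemma Good_delta (a1 : T) : Good (fun y => if [:: a1] == y then 1 else 0).
Proof.
move=> u a w; case E: (size u + size w)%N => [|N].
  move: E; case: u => [|? ?] //; case: w => [|? ?] //= _.
  by rewrite SH_nil expr0 mul1r.
have -> : ([:: a1] == u ++ a :: w) = false.
  apply/negP => /eqP /(congr1 size); rewrite size_cat /= addnS E //.
rewrite (@SH_eq _ _ (fun _ => 0)) ?SH_zero ?mulr0 // => z; rewrite size_rev E.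
by case: z => //= d z' _; rewrite eqseq_cons andbF.
Qed.

Lemma Shf_delta (a1 : T) : Shf (fun y => if [:: a1] == y then 1 else 0).
Proof.
move=> a b Ha Hb; rewrite (@SH_eq _ _ (fun _ => 0)) ?SH_zero // => z.
case: a Ha => // x a _; case: b Hb => // y b _.
case: z => [|d [|e z']] //=; last by move=> _; rewrite eqseq_cons andbF.
by rewrite addnS.
Qed.

End Lie.

Section Brk.
Variable n : nat.

Definition Lb (acc : seq (int * seq 'I_n)) (y : seq 'I_n) : int :=
  \sum_(p <- acc) (if p.2 == y then p.1 else 0).

Lemma Lb_step acc b y : Lb (brk_step acc b) y = Rm (Lb acc) b y - Lm b (Lb acc) y.
Proof.
rewrite /Lb /brk_step big_cat !big_map /=; congr (_ + _).
- case/lastP: y => [|y' c].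
    by rewrite Rm_nil big1 // => -[? [|? ?]].
  rewrite Rm_rcons; under eq_bigr do rewrite eqseq_rcons.
  rewrite [b == c]eq_sym; case: (c == b).
    by apply: eq_bigr => p _; rewrite andbT.
  by rewrite big1 // => p _; rewrite andbF.
- case: y => [|c y'] /=.
    by rewrite big1 ?oppr0.
  under eq_bigr do rewrite eqseq_cons.
  rewrite [b == c]eq_sym; case: (c == b).
    by rewrite -sumrN; apply: eq_bigr => p _ /=; case: ifP; rewrite ?oppr0.
  by rewrite big1 ?oppr0.
Qed.

Lemma Good_brk (s : seq 'I_n) : Good (Lb (brk s)) /\ Shf (Lb (brk s)).
Proof.
case: s => [|a1 s'].
  by split; [apply: (Good_ext _ (@Good_zero _)) | apply: (Shf_ext _ (@Shf_zero _))];
     move=> y; rewrite /Lb big_nil.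
rewrite /brk.
have : Good (Lb [:: (1, [:: a1])]) /\ Shf (Lb [:: (1, [:: a1])]).
  have E : forall y, (if [:: a1] == y then 1 else 0) = Lb [:: (1, [:: a1])] y.
    by move=> y; rewrite /Lb big_seq1 /=.
  by split; [apply: (Good_ext E (Good_delta a1)) | apply: (Shf_ext E (Shf_delta a1))].
elim: s' [:: (1, [:: a1])] => [|b s IH] acc //= [GA SA].
apply: IH; split.
  by apply: (Good_ext _ (Good_R b GA SA)) => y; rewrite Lb_step.
by apply: (Shf_ext _ (Shf_R b SA)) => y; rewrite Lb_step.
Qed.

End Brk.

Section Rot.
Variable T : eqType.
Implicit Types s t u : seq T.

Definition roteq s t := [exists i : 'I_(size s).+1, rot i s == t].

Lemma roteqP s t : reflect (exists j, t = rot j s) (roteq s t).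
Proof.
apply: (iffP existsP) => [[i /eqP <-]|[j ->]]; first by exists i.
rewrite rot_minn; have Hm : (minn j (size s) < (size s).+1)%N.
  by rewrite ltnS geq_minr.
by exists (Ordinal Hm).
Qed.

Lemma roteq_rot s j : roteq s (rot j s).
Proof. by apply/roteqP; exists j. Qed.

Lemma roteq_refl s : roteq s s.
Proof. by apply/roteqP; exists 0%N; rewrite rot0. Qed.

Lemma roteq_sym s t : roteq s t -> roteq t s.
Proof.
move/roteqP => [j ->]; apply/roteqP; exists (size (rot j s) - j)%N.
by rewrite -/(rotr j (rot j s)) rotK.
Qed.

Lemma roteq_trans s t u : roteq s t -> roteq t u -> roteq s u.
Proof.
move/roteqP => [j ->] /roteqP [i ->]; rewrite rot_rot_add; exact: roteq_rot.
Qed.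

Lemma roteq_rev s t : roteq s t -> roteq (rev s) (rev t).
Proof.
move/roteqP => [j ->]; rewrite rev_rot /rotr; exact: roteq_rot.
Qed.

Definition eqv p s t := roteq (take p s) (take p t) && roteq (drop p s) (drop p t).

Lemma eqv_refl p s : eqv p s s.
Proof. by rewrite /eqv !roteq_refl. Qed.

Lemma eqv_sym p s t : eqv p s t -> eqv p t s.
Proof. by case/andP => H1 H2; apply/andP; split; apply: roteq_sym. Qed.

Lemma eqv_trans p s t u : eqv p s t -> eqv p t u -> eqv p s u.
Proof.
case/andP => H1 H2 /andP [H3 H4].
by rewrite /eqv (roteq_trans H1 H3) (roteq_trans H2 H4).
Qed.

Lemma eqv_trans_eq p s t u : eqv p t u -> eqv p s t = eqv p s u.
Proof.
move=> H; apply/idP/idP => H'; first exact: eqv_trans H' H.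
exact: eqv_trans H' (eqv_sym H).
Qed.

End Rot.

Section Span.
Variables (I : finType) (V : zmodType) (g : I -> V).

Lemma span0 : in_span g 0.
Proof. by exists (fun _ => 0); rewrite big1 // => i _; rewrite mulr0z. Qed.

Lemma spanD x y : in_span g x -> in_span g y -> in_span g (x + y).
Proof.
move=> [c1 ->] [c2 ->]; exists (fun i => c1 i + c2 i).
by rewrite -big_split; apply: eq_bigr => i _; rewrite mulrzDr.
Qed.

Lemma spanZ x m : in_span g x -> in_span g (x *~ m).
Proof.
move=> [c ->]; exists (fun i => c i * m).
by rewrite mulrz_suml; apply: eq_bigr => i _; rewrite mulrzA.
Qed.

Lemma span_sum (J : finType) (F : J -> V) :
  (forall j, in_span g (F j)) -> in_span g (\sum_(j : J) F j).
Proof.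
move=> H; elim: (index_enum J) => [|j r IH]; first by rewrite big_nil; exact: span0.
by rewrite big_cons; apply: spanD.
Qed.

Lemma span_gen i : in_span g (g i).
Proof.
exists (fun j => if j == i then 1 else 0).
rewrite (bigD1 i) //= eqxx mulr1z big1 ?addr0 // => j /negPf ->.
by rewrite mulr0z.
Qed.

End Span.

Lemma eqv_trans_eqL (T : eqType) p (s t u : seq T) : eqv p s t -> eqv p s u = eqv p t u.
Proof.
move=> H; apply/idP/idP => H'; first exact: eqv_trans (eqv_sym H) H'.
exact: eqv_trans H H'.
Qed.

Section Classes.
Variables n k : nat.
Notation tup := (k.-tuple 'I_n).

Definition dl (s : seq 'I_n) : tens n k := [ffun v : tup => if tval v == s then 1 else 0].

Lemma rel_step p b (s : seq 'I_n) : size s = k ->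
  in_span (@cyc_rel n k p) (dl s - dl (rot_part p b s)).
Proof.
move=> Hs; have Hs' : size s == k by rewrite Hs.
have -> : dl s - dl (rot_part p b s) = cyc_rel p (Tuple Hs', b).
  by apply/ffunP => v; rewrite !ffunE.
exact: span_gen.
Qed.

Lemma rel_pre p (pre suf : seq 'I_n) i : size pre = p -> size (pre ++ suf) = k ->
  (i <= size pre)%N ->
  in_span (@cyc_rel n k p) (dl (pre ++ suf) - dl (rot i pre ++ suf)).
Proof.
move=> Hp Hk; elim: i => [|i IH] Hi; first by rewrite rot0 subrr; exact: span0.
have -> : dl (pre ++ suf) - dl (rot i.+1 pre ++ suf) =
  (dl (pre ++ suf) - dl (rot i pre ++ suf)) + (dl (rot i pre ++ suf) - dl (rot i.+1 pre ++ suf)).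
  by rewrite addrA subrK.
apply: spanD; first by apply: IH; exact: ltnW.
rewrite (rotS Hi).
have -> : rot 1 (rot i pre) ++ suf = rot_part p true (rot i pre ++ suf).
  by rewrite /rot_part take_size_cat ?drop_size_cat // size_rot.
by apply: rel_step; rewrite size_cat size_rot -size_cat.
Qed.

Lemma rel_suf p (pre suf : seq 'I_n) j : size pre = p -> size (pre ++ suf) = k ->
  (j <= size suf)%N ->
  in_span (@cyc_rel n k p) (dl (pre ++ suf) - dl (pre ++ rot j suf)).
Proof.
move=> Hp Hk; elim: j => [|j IH] Hj; first by rewrite rot0 subrr; exact: span0.
have -> : dl (pre ++ suf) - dl (pre ++ rot j.+1 suf) =
  (dl (pre ++ suf) - dl (pre ++ rot j suf)) + (dl (pre ++ rot j suf) - dl (pre ++ rot j.+1 suf)).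
  by rewrite addrA subrK.
apply: spanD; first by apply: IH; exact: ltnW.
rewrite (rotS Hj).
have -> : pre ++ rot 1 (rot j suf) = rot_part p false (pre ++ rot j suf).
  by rewrite /rot_part take_size_cat ?drop_size_cat.
by apply: rel_step; rewrite size_cat size_rot -size_cat.
Qed.

Lemma rel_eqv p (s t : seq 'I_n) : (p <= k)%N -> size s = k -> size t = k -> eqv p s t ->
  in_span (@cyc_rel n k p) (dl s - dl t).
Proof.
move=> Hpk Hs Ht /andP [/existsP [i /eqP Hi] /existsP [j /eqP Hj]].
have Es : s = take p s ++ drop p s by rewrite cat_take_drop.
have Et : t = rot i (take p s) ++ rot j (drop p s) by rewrite Hi Hj cat_take_drop.
move: i j Hi Hj Et; set pre := take p s; set suf := drop p s => i j Hi Hj Et.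
rewrite Es Et.
have -> : dl (pre ++ suf) - dl (rot i pre ++ rot j suf) =
  (dl (pre ++ suf) - dl (rot i pre ++ suf)) + (dl (rot i pre ++ suf) - dl (rot i pre ++ rot j suf)).
  by rewrite addrA subrK.
have Hsp : size pre = p by rewrite size_takel // Hs.
apply: spanD.
  by apply: rel_pre => //; [rewrite -Es | rewrite -ltnS].
apply: rel_suf => //; last by rewrite -ltnS.
  by rewrite size_rot.
by rewrite size_cat size_rot -size_cat -Es.
Qed.


Lemma span_of_classes p (y : tens n k) : (p <= k)%N ->
  (forall w0 : tup, \sum_(v : tup | eqv p (tval w0) (tval v)) y v = 0) ->
  in_span (@cyc_rel n k p) y.
Proof.
move=> Hp Hy.
pose rep (v : tup) := odflt v [pick v' : tup | eqv p (tval v) (tval v')].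
have rep_eqv : forall v, eqv p (tval v) (tval (rep v)).
  by move=> v; rewrite /rep; case: pickP => [v' ->|_] //=; exact: eqv_refl.
have rep_eq : forall v v', eqv p (tval v) (tval v') -> rep v = rep v'.
  move=> v v' H; rewrite /rep.
  rewrite (@eq_pick _ _ (fun v'' : tup => eqv p (tval v') (tval v''))); last first.
    by move=> v''; exact: eqv_trans_eqL.
  by case: pickP => [//|H0]; have := H0 v'; rewrite eqv_refl.
have Ey : y = \sum_(v : tup) (dl (tval v) - dl (tval (rep v))) *~ y v +
              \sum_(v : tup) dl (tval (rep v)) *~ y v.
  rewrite -big_split /=.
  under eq_bigr do rewrite -mulrzDl subrK.
  apply/ffunP => w; rewrite sum_ffunE (bigD1 w) //= ffunMzE ffunE eqxx mulrzz mul1r.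
  rewrite big1 ?addr0 // => v Hv; rewrite ffunMzE ffunE val_eqE eq_sym.
  by rewrite (negPf Hv) mul0rz.
have E2 : \sum_(v : tup) dl (tval (rep v)) *~ y v = 0.
  apply/ffunP => w; rewrite sum_ffunE ffunE.
  under eq_bigr do rewrite ffunMzE ffunE.
  case: (pickP (fun v0 : tup => rep v0 == w)) => [v0 /eqP Hv0 | H0].
    have Ev : forall v, (tval w == tval (rep v)) = eqv p (tval v0) (tval v).
      move=> v; rewrite val_eqE -Hv0; apply/eqP/idP => [H|H]; last by rewrite (rep_eq _ _ H).
      apply: eqv_trans (rep_eqv v0) _; rewrite H; exact: eqv_sym (rep_eqv v).
    under eq_bigr do rewrite Ev.
    rewrite -[RHS](Hy v0) [RHS]big_mkcond; apply: eq_bigr => v _.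
    by case: ifP => _; rewrite ?mulrzz ?mul1r ?mul0r.
  rewrite big1 // => v _; rewrite val_eqE eq_sym.
  by move: (H0 v) => /= ->; rewrite mul0rz.
rewrite Ey E2 addr0; apply: span_sum => v; apply: spanZ.
by apply: rel_eqv; rewrite ?size_tuple.
Qed.

End Classes.

Lemma size_masks (T : Type) (m : seq bool) (z : seq T) : size m = size z ->
  (size (mask m z) + size (mask (map negb m) z))%N = size z.
Proof.
elim: m z => [|b m IH] [|c z] //= [H]; case: b => /=; by rewrite ?addSn ?addnS IH.
Qed.

Section Final.
Variables n k : nat.
Notation tup := (k.-tuple 'I_n).

Lemma ins_cond p (i : 'I_n) (w v : seq 'I_n) : (p <= k)%N -> size w = k.+1 -> size v = k ->
  ((nth i w p == i) && (take p w ++ drop p.+1 w == v)) = (w == take p v ++ i :: drop p v).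
Proof.
move=> Hp Hw Hv; apply/idP/eqP => [/andP [/eqP Hn /eqP Hv'] | ->].
  have Hpw : (p <= size w)%N by rewrite Hw; exact: leqW.
  have Ht : take p v = take p w by rewrite -Hv' take_size_cat // size_takel.
  have Hd : drop p v = drop p.+1 w by rewrite -Hv' drop_size_cat // size_takel.
  by rewrite Ht Hd -{1}Hn -drop_nth ?cat_take_drop // Hw ltnS.
rewrite nth_cat size_takel ?Hv // ltnn subnn /= eqxx /=.
rewrite take_size_cat ?size_takel ?Hv // -cat_rcons drop_size_cat ?size_rcons ?size_takel ?Hv //.
by rewrite cat_take_drop.
Qed.

Lemma Phi_formula l (x : dtens n k.+1) (P : 'I_n -> seq 'I_n -> int) (v : tup) :
  (1 <= l <= k.+1)%N -> (forall i (w : (k.+1).-tuple 'I_n), x (i, w) = P i (tval w)) ->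
  Phi l x v = \sum_(i : 'I_n) P i (take l.-1 v ++ i :: drop l.-1 v).
Proof.
case: l => // p /andP [_ Hl2] HP; rewrite ltnS in Hl2; rewrite /Phi ffunE /=.
pose F := fun (i : 'I_n) (w : (k.+1).-tuple 'I_n) =>
  if (nth i (tval w) p == i) && (take p (tval w) ++ drop p.+1 (tval w) == tval v)
  then x (i, w) else 0.
rewrite (eq_bigr (fun iw => F iw.1 iw.2)); last by case.
rewrite -(pair_bigA _ F); apply: eq_bigr => i _; rewrite /F.
have Hs : size (take p v ++ i :: drop p v) == k.+1.
  by rewrite size_cat /= size_takel ?size_tuple // addnS subnKC.
rewrite (bigD1 (Tuple Hs)) //= big1 ?addr0.
  rewrite ins_cond ?size_tuple //; first by rewrite eq_refl HP.
  by rewrite (minn_idPl Hl2) addnS subnKC.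
move=> w Hw; rewrite ins_cond ?size_tuple //; case: eqP => // Ew.
by exfalso; move/negP: Hw; apply; apply/eqP/val_inj.
Qed.

Lemma sum_cond p (w0 : seq 'I_n) (A B : seq 'I_n) : (size A + size B)%N = k -> (p <= k)%N ->
  \sum_(v : tup | eqv p w0 v) (if (A == rev (take p v)) && (B == drop p v) then 1 else 0)
  = if (size A == p) && eqv p w0 (rev A ++ B) then 1 else 0 :> int.
Proof.
move=> HAB Hp.
have key : forall v : tup, ((A == rev (take p v)) && (B == drop p v)) =
                           (size A == p) && (tval v == rev A ++ B).
  move=> v; apply/andP/andP => [[/eqP HA /eqP HB]|[/eqP HA /eqP HV]].
    split; first by rewrite HA size_rev size_takel ?size_tuple.
    by rewrite HA HB revK cat_take_drop.
  by rewrite HV take_size_cat ?size_rev // drop_size_cat ?size_rev // revK !eqxx.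
under eq_bigr do rewrite key.
case: (boolP (size A == p)) => HA /=; last by rewrite big1.
have HS : size (rev A ++ B) == k by rewrite size_cat size_rev HAB.
rewrite big_mkcond (bigD1 (Tuple HS)) //= eqxx big1 ?addr0; first by case: ifP.
move=> v Hv; have : tval v != rev A ++ B.
  by apply: contra Hv => /eqP Hv'; apply/eqP/val_inj.
by move/negPf ->; case: ifP.
Qed.


Definition fq p (w0 : seq 'I_n) (q : seq (bool * 'I_n)) : int :=
  \sum_(v : tup | eqv p w0 v)
     (if (mask (map fst q) (map snd q) == rev (take p v)) &&
         (mask (map negb (map fst q)) (map snd q) == drop p v) then 1 else 0).

Lemma fq_rot p w0 q : (p <= k)%N -> size q = k -> fq p w0 (rot 1 q) = fq p w0 q.
Proof.
move=> Hp Hq; rewrite /fq !map_rot !mask_rot ?size_map //.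
have HAB : (size (mask (map fst q) (map snd q)) +
            size (mask (map negb (map fst q)) (map snd q)))%N = k
  by rewrite size_masks ?size_map.
rewrite !sum_cond ?size_rot //.
set A := mask (map fst q) (map snd q); set B := mask (map negb (map fst q)) (map snd q).
set c := count id _; set c' := count id _.
case: (boolP (size A == p)) => //= /eqP HA.
rewrite (@eqv_trans_eq _ p w0 _ (rev A ++ B)) //.
rewrite /eqv !take_size_cat ?size_rev ?size_rot // !drop_size_cat ?size_rev ?size_rot //.
apply/andP; split; first by apply: roteq_rev; apply: roteq_sym; apply: roteq_rot.
by apply: roteq_sym; apply: roteq_rot.
Qed.

Lemma main_aux l (x : dtens n k.+1) : (1 <= l <= k.+1)%N ->
  in_span (@lie_gen n k) x -> in_ker_Theta 1 x -> in_ker_Theta l x.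
Proof.
move=> Hl [c Hx] [d Hd].
pose P (i : 'I_n) (y : seq 'I_n) :=
  \sum_(g : 'I_n * (k.+1).-tuple 'I_n) (if i == g.1 then Lb (brk (tval g.2)) y else 0) *~ c g.
have HP : forall i (w : (k.+1).-tuple 'I_n), x (i, w) = P i (tval w).
  move=> i w; rewrite Hx sum_ffunE /P; apply: eq_bigr => g _; rewrite ffunMzE !ffunE /=.
  by case: ifP => _ //; rewrite ffunE.
have GP : forall i, Good (P i).
  by move=> i; apply: Good_sumz => g; apply: Good_if; exact: (Good_brk _).1.
have Hp : (l.-1 <= k)%N by case/andP: Hl => H1 H2; rewrite -ltnS prednK.
rewrite /in_ker_Theta; apply: span_of_classes => // w0.
set p := l.-1.
pose Phi' (z : seq 'I_n) := \sum_(i : 'I_n) P i (i :: z).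
have E1 : forall v : tup, Phi l x v = (-1) ^+ p *
    \sum_(q <- W (bool * 'I_n)%type k)
      (if (mask (map fst q) (map snd q) == rev (take p v)) &&
          (mask (map negb (map fst q)) (map snd q) == drop p v)
       then Phi' (map snd q) else 0).
  move=> v; rewrite (@Phi_formula l x P v Hl HP) -/p.
  have Hsz : (size (rev (take p v)) + size (drop p v))%N = k.
    by rewrite size_rev size_takel ?size_tuple // subnKC.
  under eq_bigr do rewrite GP size_takel ?size_tuple //.
  rewrite -mulr_sumr; congr (_ * _).
  rewrite /SH Hsz exchange_big; apply: eq_bigr => q _; rewrite /Phi'.
  by case: ifP => _ //; rewrite big1.
under eq_bigr do rewrite E1.
rewrite -mulr_sumr exchange_big /=.
rewrite [X in _ * X](_ : _ = 0) ?mulr0 //.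
rewrite (eq_bigr (fun q => fq p (tval w0) q * Phi' (map snd q))); last first.
  move=> q _; rewrite /fq mulr_suml; apply: eq_bigr => v _.
  by case: ifP; rewrite ?mul1r ?mul0r.
rewrite (eq_big_seq (fun q => \sum_(ub : tup * bool) fq p (tval w0) q *
   (((if map snd q == tval ub.1 then 1 else 0) -
     (if map snd q == rot_part 0 ub.2 (tval ub.1) then 1 else 0)) *~ d ub))); last first.
  move=> q; rewrite mem_W => /eqP Hq; rewrite -mulr_sumr; congr (_ * _).
  have Hz : size (map snd q) == k by rewrite size_map Hq.
  rewrite /Phi'; have := @Phi_formula 1 x P (Tuple Hz) isT HP; rewrite /= take0 drop0 /= => <-.
  rewrite Hd sum_ffunE; apply: eq_bigr => ub _; by rewrite ffunMzE ffunE.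
rewrite exchange_big; apply: big1 => ub _.
under eq_bigr do rewrite mulrzAr.
rewrite -mulrz_suml.
rewrite [X in X *~ _](_ : _ = 0) ?mul0rz //.
under eq_bigr do rewrite mulrBr.
rewrite sumrB; apply/eqP; rewrite subr_eq0; apply/eqP.
case: ub => [u [|]] /=; rewrite /rot_part take0 drop0 //=.
rewrite [RHS](perm_big _ (@perm_W _ k (rot 1) (rotr 1) (@rotrK 1 _) (@rot_inj 1 _)
   (@size_rotr 1 _) (@size_rot 1 _))) big_map.
apply: eq_big_seq => q; rewrite mem_W => /eqP Hq.
by rewrite fq_rot // map_rot (inj_eq (@rot_inj 1 _)).
Qed.

End Final.

Local Close Scope ring_scope.
Unset Implicit Arguments.

Theorem mainTheorem7 (n k : nat) (hk : 2 <= k) (hn : k + 2 <= n)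
  (l : nat) (hl1 : 1 <= l) (hl2 : l <= k.+1)
  (x : dtens n k.+1) (hx : in_span (@lie_gen n k) x) :
  in_ker_Theta 1 x -> in_ker_Theta l x.
Proof.
move=> H; apply: (@main_aux n k l x) => //.
by rewrite hl1 hl2.
Qed.
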